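(* Let $T=(V,E)$ be a tree rooted at $r$, $w:V\to\mathbb R_{\ge0}$, and $C$ a partial coloring with domain $\mathrm{support}(w)=\{v:w(v)>0\}$. Assume: (i) there are no $x,y,z\in\mathrm{support}(w)$ with $y$ on the path from $x$ to $z$ and $C(x)=C(z)\neq C(y)$; (ii) no vertex lies in $\mathrm{carrier}(d_1,C)\cap\mathrm{carrier}(d_2,C)\cap\mathrm{carrier}(d_3,C)$ for three distinct colors. For each color $d$ let $r_d$ be the root (vertex closest to $r$) of $\mathrm{carrier}(d,C)$, and let $d_0$ be a color with $r_{d_0}$ at maximum distance from $r$; assume $r_{d_0}\neq r$ and let $s$ be the parent of $r_{d_0}$. Let $\bar T$ be the subtree of all descendants of $r_{d_0}$ (including $r_{d_0}$) and $\hat T=T\setminus\bar T$. Assume further that there is a color $d'\neq d_0$ with $C(V(\bar T))=\{d_0,d'\}$ and $r_{d_0}\in\mathrm{carrier}(d_0,C)\cap\mathrm{carrier}(d',C)$. All costs below are relative to $C|_{V(\bar T)}$ and $w|_{V(\bar T)}$. Let $C_{high}$ be the coloring of $V(\bar T)$ assigning $d_0$ to every vertex; let $C_{medium}$ be a minimum-cost convex coloring of $\bar T$ with colors in $\{d_0,d'\}$ among those that either equal $C_{high}$ or color $r_{d_0}$ by $d'$; let $C_{min}$ be a minimum-cost convex coloring of $\bar T$ with colors in $\{d_0,d'\}$. Define $(T',C',w_1)$: $T'$ is obtained from $T$ by replacing $\bar T$ with a two-vertex path consisting of $r_{d_0}$ (a child of $s$) and a single child $v_0$ of $r_{d_0}$;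 $w_1(v)=w(v)$ and $C'(v)=C(v)$ for $v\in V(\hat T)$; $w_1(r_{d_0})=\mathrm{cost}(C_{medium})-\mathrm{cost}(C_{min})$ and $w_1(v_0)=\mathrm{cost}(C_{high})-\mathrm{cost}(C_{min})$; $C'(r_{d_0})=d_0$ if $w_1(r_{d_0})>0$ and $C'(v_0)=d'$ if $w_1(v_0)>0$ (otherwise they are uncolored). Then $$\mathrm{OPT}(T',C',w_1)=\mathrm{OPT}(T,C,w)-\mathrm{cost}(C_{min}).$$
   Context: For a partial coloring $C$ and color $d$, $\mathrm{carrier}(d,C)$ is the minimal connected subtree containing all vertices $v$ with $C(v)=d$. A partial coloring of a tree is convex if it can be extended to a total coloring in which every color class induces a connected subtree. For a (partial) input coloring $C$ with weights $w$ and a convex total coloring $C''$, $\mathrm{cost}(C'')=w(\{v\in\mathrm{Domain}(C): C''(v)\neq C(v)\})$, and $\mathrm{OPT}(T,C,w)$ is the minimum cost of a convex total coloring of $T$ (equivalently the minimum weight of a set $X$ such that $C$ restricted to $\mathrm{Domain}(C)\setminus X$ is convex). *)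

(* Defs.v *)
From mathcomp Require Import all_boot all_order all_algebra.
Set Implicit Arguments. Unset Strict Implicit. Unset Printing Implicit Defensive.
Import Order.TTheory GRing.Theory Num.Theory.
Local Open Scope ring_scope.

Section Trees.
Variable V : finType.
Variable e : rel V.

Definition upath (x : V) (p : seq V) (y : V) : bool :=
  [&& path e x p, uniq (x :: p) & last x p == y].

Definition is_tree : Prop :=
  symmetric e /\ irreflexive e /\ forall x y : V, exists! p, upath x p y.

Definition on_path (x y z : V) : Prop := exists p, upath x p z /\ y \in x :: p.

Definition dist_is (x y : V) (n : nat) : Prop := exists p, upath x p y /\ size p = n.

Definition connected (A : {set V}) : Prop :=
  forall x y, x \in A -> y \in A ->
    exists p, [/\ path e x p, last x p = y & all (fun u => u \in A) p].

Variable K : eqType.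

(* carrier(d,C): the minimal connected subtree containing all vertices
   coloured d, i.e. the intersection of all connected vertex sets
   containing the colour class of d *)
Definition in_carrier (C : V -> option K) (d : K) (v : V) : Prop :=
  forall A : {set V}, connected A -> (forall u, C u = Some d -> u \in A) -> v \in A.

Definition carrier_root (r : V) (C : V -> option K) (d : K) (rd : V) : Prop :=
  in_carrier C d rd /\
  forall u n m, in_carrier C d u -> dist_is r rd n -> dist_is r u m -> (n <= m)%N.

Definition convex_on (S : {set V}) (f : V -> K) : Prop :=
  forall k : K, connected [set v in S | f v == k].

Variable R : realFieldType.

Definition cost_on (C : V -> option K) (w : V -> R) (S : {set V}) (f : V -> K) : R :=
  \sum_(v in S | (C v != None) && (C v != Some (f v))) w v.

Definition OPT_is (C : V -> option K) (w : V -> R) (o : R) : Prop :=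
  (exists f : V -> K, convex_on setT f /\ cost_on C w setT f = o) /\
  (forall f : V -> K, convex_on setT f -> o <= cost_on C w setT f).

End Trees.

(* Construction of T': vertices of hat T (= V \ Tb) plus two new vertices,
   inr false = r_{d0} (child of s) and inr true = v0 (child of r_{d0}). *)
Section NewTree.
Variables (V : finType) (K : eqType) (R : realFieldType).
Variables (e : rel V) (Tb : {set V}) (s : V).

Definition hatV := {v : V | v \notin Tb}.
Definition newV := (hatV + bool)%type.

Definition new_edge : rel newV := fun a b =>
  match a, b with
  | inl x, inl y => e (val x) (val y)
  | inl x, inr false => val x == s
  | inr false, inl y => val y == s
  | inr false, inr true => true
  | inr true, inr false => true
  | _, _ => false
  end.

Variables (w : V -> R) (C : V -> option K) (wr wv : R) (d0 d' : K).

Definition new_w : newV -> R := fun a =>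
  match a with inl x => w (val x) | inr false => wr | inr true => wv end.

Definition new_C : newV -> option K := fun a =>
  match a with
  | inl x => C (val x)
  | inr false => if 0 < wr then Some d0 else None
  | inr true => if 0 < wv then Some d' else None
  end.
End NewTree.

Arguments new_edge [V] e Tb s _ _.
Arguments new_w [V R] Tb w wr wv _.
Arguments new_C [V K R] Tb C wr wv d0 d' _.

(* Main.v *)
Require Import Defs.
From mathcomp Require Import all_boot all_order all_algebra.
Set Implicit Arguments. Unset Strict Implicit. Unset Printing Implicit Defensive.

Section Walks.
Variable V : finType.
Variable e : rel V.
Hypothesis esym : symmetric e.
Implicit Types (A B S : {set V}) (x y : V).

Definition walk (A : {set V}) (x y : V) : Prop :=
  exists p, [/\ path e x p, last x p = y & all (fun u => u \in A) p].

Lemma walk_refl A x : walk A x x.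
Proof. by exists [::]. Qed.

Lemma walk_edge A x y : e x y -> y \in A -> walk A x y.
Proof. by move=> exy yA; exists [:: y]; rewrite /= exy yA. Qed.

Lemma walk_cat A x y z : walk A x y -> walk A y z -> walk A x z.
Proof.
move=> [p [p1 p2 p3]] [q [q1 q2 q3]]; exists (p ++ q).
by rewrite cat_path p1 last_cat p2 q1 q2 all_cat p3 q3.
Qed.

Lemma walk_sub (A B : {set V}) x y : A \subset B -> walk A x y -> walk B x y.
Proof.
move=> /subsetP sAB [p [p1 p2 p3]]; exists p; split => //.
by apply/allP => u /(allP p3) /sAB.
Qed.

Lemma walk_ind A (P : V -> Prop) x y :
  P x -> (forall u v, P u -> e u v -> v \in A -> P v) -> walk A x y -> P y.
Proof.
move=> Px step [p [p1 <- p3]]; elim: p x Px p1 p3 => [|z p IH] x Px //=.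
move=> /andP[exz pz] /andP[zA pA]; apply: IH pz pA; exact: step exz zA.
Qed.

Lemma walk_sym A x y : x \in A -> walk A x y -> walk A y x.
Proof.
move=> xA w.
suff [] : walk A y x /\ y \in A by [].
apply: (walk_ind (P := fun v => walk A v x /\ v \in A)) w => [|u v [wu uA] euv vA].
  by split => //; exact: walk_refl.
split => //; apply: walk_cat wu; apply: walk_edge => //.
by rewrite esym.
Qed.

Lemma walk_closed (A B : {set V}) x y :
  (forall u v, e u v -> u \in B -> v \in A -> v \in B) ->
  x \in B -> walk A x y -> walk B x y /\ y \in B.
Proof.
move=> cl xB; apply: (walk_ind (P := fun v => walk B x v /\ v \in B)).
  by split => //; apply: walk_refl.
move=> u v [wu uB] euv vA; have vB := cl u v euv uB vA.
by split => //; apply: walk_cat wu (walk_edge euv vB).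
Qed.

Lemma walk_cross A (X : {set V}) x y : x \in A -> walk A x y -> x \in X -> y \notin X ->
  exists u v, [/\ e u v, u \in A, v \in A, u \in X & v \notin X].
Proof.
move=> xA [p [p1 p2 p3]]; elim: p x xA p1 p2 p3 => [|z p IH] x xA /=.
  by move=> _ -> _ ->.
move=> /andP[exz pz] lz /andP[zA pA] xX yX.
case zX: (z \in X); first exact: IH zA pz lz pA zX yX.
by exists x, z; rewrite exz xA zA xX zX.
Qed.

Lemma connected_walk A x y : connected e A -> x \in A -> y \in A -> walk A x y.
Proof. by move=> cA xA yA; exact: cA. Qed.

Lemma walk_connected A : (forall x y, x \in A -> y \in A -> walk A x y) -> connected e A.
Proof. by []. Qed.

Lemma connected0 : connected e set0.
Proof. by move=> x y; rewrite inE. Qed.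

Lemma connected_eq (A B : {set V}) : A = B -> connected e A -> connected e B.
Proof. by move=> ->. Qed.

Lemma connectedU (A B : {set V}) a b : connected e A -> connected e B ->
  a \in A -> b \in B -> e a b -> connected e (A :|: B).
Proof.
move=> cA cB aA bB eab x y.
have sA : A \subset A :|: B by apply/subsetP => z zA; rewrite inE zA.
have sB : B \subset A :|: B by apply/subsetP => z zB; rewrite inE zB orbT.
rewrite !inE => /orP[xA|xB] /orP[yA|yB].
- exact: walk_sub sA (cA _ _ xA yA).
- apply: walk_cat (walk_sub sA (cA _ _ xA aA)) _.
  apply: walk_cat (walk_edge eab _) (walk_sub sB (cB _ _ bB yB)).
  by rewrite inE bB orbT.
- apply: walk_cat (walk_sub sB (cB _ _ xB bB)) _.
  apply: walk_cat (walk_edge _ _) (walk_sub sA (cA _ _ aA yA)).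
    by rewrite esym.
  by rewrite inE aA.
- exact: walk_sub sB (cB _ _ xB yB).
Qed.

Section Portal.
Variables (Z : {set V}) (z : V).
Hypothesis portal : forall x y, e x y -> x \in Z -> y \notin Z -> x = z.
Definition pr v := if v \in Z then v else z.

Lemma walk_proj S x y : walk S x y -> walk (S :&: Z) (pr x) (pr y).
Proof.
move=> [p [p1 <- p3]]; elim: p x p1 p3 => [|u p IH] x /=.
  by move=> _ _; apply: walk_refl.
move=> /andP[exu pu] /andP[uS pS]; apply: walk_cat (IH _ pu pS).
rewrite /pr; case xZ: (x \in Z); case uZ: (u \in Z).
- by apply: walk_edge exu _; rewrite inE uS uZ.
- by rewrite (portal exu xZ (negbT uZ)); apply: walk_refl.
- rewrite esym in exu; rewrite (portal exu uZ (negbT xZ)); apply: walk_refl.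
- exact: walk_refl.
Qed.

Lemma connected_side S : connected e S -> connected e (S :&: Z).
Proof.
move=> cS x y; rewrite !inE => /andP[xS xZ] /andP[yS yZ].
have := walk_proj (cS _ _ xS yS); by rewrite /pr xZ yZ.
Qed.
End Portal.

Section Bridge.
Variables (X : {set V}) (u t : V).
Hypothesis bridge : forall x y, e x y -> x \in X -> y \notin X -> x = u /\ y = t.
Hypothesis eut : e u t.

Lemma portalX : forall x y, e x y -> x \in X -> y \notin X -> x = u.
Proof. by move=> x y exy xX yX; case: (bridge exy xX yX). Qed.
Lemma portalnX : forall x y, e x y -> x \in ~: X -> y \notin ~: X -> x = t.
Proof.
move=> x y exy; rewrite !inE negbK => xX yX; rewrite esym in exy.
by case: (bridge exy yX xX).
Qed.

Lemma bridge_split1 S : connected e S ->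
  connected e (S :&: X) /\ connected e (S :&: ~: X).
Proof.
move=> cS; split; [exact: (connected_side portalX cS) | exact: (connected_side portalnX cS)].
Qed.

Lemma bridge_split2 S : connected e S -> forall x y, x \in S -> x \in X ->
  y \in S -> y \notin X -> u \in S /\ t \in S.
Proof.
move=> cS x y xS xX yS yX.
have [a [b [eab aS bS aX bX]]] := walk_cross xS (cS _ _ xS yS) xX yX.
by case: (bridge eab aX bX) => <- <-.
Qed.

Lemma bridge_glue S : connected e (S :&: X) -> connected e (S :&: ~: X) ->
  ((exists x, x \in S :&: X) -> (exists y, y \in S :&: ~: X) -> u \in S /\ t \in S) ->
  u \in X -> t \notin X ->
  connected e S.
Proof.
move=> c1 c2 h uX tX.
have -> : S = (S :&: X) :|: (S :&: ~: X) by rewrite -setIUr setUCr setIT.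
case: (boolP [exists x, x \in S :&: X]) => [/existsP ex1|/existsPn n1].
  case: (boolP [exists x, x \in S :&: ~: X]) => [/existsP ex2|/existsPn n2].
    have [uS tS] := h ex1 ex2.
    by apply: (connectedU c1 c2 (a := u) (b := t)) => //; rewrite !inE ?uS ?uX ?tS ?tX.
  have -> : S :&: ~: X = set0 by apply/setP => v; rewrite [RHS]inE (negbTE (n2 v)).
  by rewrite setU0.
have -> : S :&: X = set0 by apply/setP => v; rewrite [RHS]inE (negbTE (n1 v)).
by rewrite set0U.
Qed.
End Bridge.

End Walks.

Section Walks2.
Variable V : finType.
Variable e : rel V.
Hypothesis esym : symmetric e.
Implicit Types (A B S : {set V}) (x y : V).

Definition erest B := [rel x y | e x y && (y \in B)].

Lemma path_erest B x p : path (erest B) x p = path e x p && all (fun u => u \in B) p.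
Proof.
elim: p x => [|z p IH] x //=; rewrite IH.
by case: (e x z); case: (z \in B); rewrite ?andbF.
Qed.

Lemma walkP B x y : walk e B x y <-> connect (erest B) x y.
Proof.
split.
  move=> [p [p1 p2 p3]]; apply/connectP; exists p; last by rewrite p2.
  by rewrite path_erest p1 p3.
move=> /connectP [p pp ->]; exists p; move: pp; rewrite path_erest => /andP[-> ->].
by [].
Qed.

Section Normalize.
Variable K : eqType.
Hypothesis cT : connected e setT.
Variables (f : V -> K) (k : K).
Hypothesis fconv : convex_on e setT f.

Lemma normalize x y : f x = k -> f y != k ->
  exists c, c != k /\ convex_on e setT (fun v => if f v == k then c else f v).
Proof.
move=> fx fy.
pose D := [set v in setT | f v == k].
have xD : x \in D by rewrite !inE fx eqxx.
have yD : y \notin D by rewrite !inE.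
have xT : x \in [set: V] by rewrite inE.
have [u [t [eut _ _ uD tD]]] := walk_cross xT (cT xT (in_setT y)) xD yD.
exists (f t); split; first by move: tD; rewrite !inE.
move=> j.
case: (eqVneq j (f t)) => [->|jt].
  apply: (connected_eq (A := D :|: [set v in setT | f v == f t])).
    apply/setP => v; rewrite !inE; case: (eqVneq (f v) k) => [fvk|fvk] /=.
      by rewrite eqxx.
    by [].
  have tB : t \in [set v in setT | f v == f t] by rewrite !inE eqxx.
  exact: (connectedU esym (@fconv k) (@fconv (f t)) uD tB eut).
case: (eqVneq j k) => [->|jk].
  apply: (connected_eq (A := set0)); last exact: connected0.
  apply/setP => v; rewrite !inE; case: (eqVneq (f v) k) => [fvk|fvk] /=.
    by symmetry; apply/negP => /eqP ekt; move: tD; rewrite !inE -ekt eqxx.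
  by rewrite (negbTE fvk).
apply: (connected_eq (A := [set v in setT | f v == j])); last exact: (@fconv j).
apply/setP => v; rewrite !inE; case: (eqVneq (f v) k) => [fvk|//] /=.
by rewrite fvk eq_sym (negbTE jk) eq_sym (negbTE jt).
Qed.
End Normalize.

Section Separate.
Variables (U S0 : {set V}) (b : V).
Hypothesis cU : connected e U.
Hypothesis cS0 : connected e S0.
Hypothesis sS0 : S0 \subset U.
Hypothesis bU : b \in U.
Hypothesis bS0 : b \notin S0.

Definition Comp := [set v in U :\: S0 | connect (erest (U :\: S0)) b v].

Lemma bComp : b \in Comp.
Proof. by rewrite inE !inE bU bS0 connect0. Qed.

Lemma Comp_closed u v : e u v -> u \in Comp -> v \in U :\: S0 -> v \in Comp.
Proof.
move=> euv; rewrite inE => /andP[uB cu] vB; rewrite inE vB /=.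
apply: connect_trans cu _; apply: connect1; by rewrite /= euv vB.
Qed.

Lemma Comp_sub : Comp \subset U :\: S0.
Proof. by apply/subsetP => v; rewrite inE => /andP[]. Qed.

Lemma connected_Comp : connected e Comp.
Proof.
move=> x y xC yC.
have bB : b \in U :\: S0 by rewrite !inE bU bS0.
have wx : walk e (U :\: S0) b x by apply/walkP; move: xC; rewrite inE => /andP[].
have wy : walk e (U :\: S0) b y by apply/walkP; move: yC; rewrite inE => /andP[].
have := walk_cat (walk_sym esym bB wx) wy.
by move=> w; case: (walk_closed Comp_closed xC w).
Qed.

Lemma S1_Comp (S1 : {set V}) : connected e S1 -> b \in S1 -> S1 \subset U :\: S0 ->
  S1 \subset Comp.
Proof.
move=> cS1 bS1 sS1; apply/subsetP => v vS1.
have := walk_sub sS1 (cS1 _ _ bS1 vS1).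
by move=> w; case: (walk_closed Comp_closed bComp w).
Qed.

Lemma rest_reach x : x \in U :\: Comp -> exists z, z \in S0 /\ walk e (U :\: Comp) x z.
Proof.
move=> xR.
case xS0: (x \in S0); first by exists x; split => //; apply: walk_refl.
have xU : x \in U by move: xR; rewrite in_setD => /andP[].
have [p [p1 p2 p3]] := cU xU bU.
elim: p x xR xS0 xU p1 p2 p3 => [|y p IH] x xR xS0 xU /=.
  by move=> _ xb; move: xR; rewrite xb in_setD bComp.
move=> /andP[exy py] ly /andP[yU pU].
case yS0: (y \in S0).
  exists y; split => //; apply: walk_edge exy _.
  rewrite in_setD yU andbT; apply/negP => yC.
  by move: (subsetP Comp_sub _ yC); rewrite !inE yS0.
have yR : y \in U :\: Comp.
  rewrite in_setD yU andbT; apply/negP => yC.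
  have xC : x \in Comp.
    by apply: (Comp_closed (u := y) _ yC); [rewrite esym | rewrite !inE xS0 xU].
  by move: xR; rewrite in_setD xC.
have [z [zS0 wz]] := IH y yR yS0 yU py ly pU.
by exists z; split => //; apply: walk_cat (walk_edge exy yR) wz.
Qed.

Lemma connected_rest : connected e (U :\: Comp).
Proof.
have sR : S0 \subset U :\: Comp.
  apply/subsetP => v vS0; rewrite in_setD (subsetP sS0 _ vS0) andbT; apply/negP => vC.
  by move: (subsetP Comp_sub _ vC); rewrite !inE vS0.
suff H : forall x y, x \in U :\: Comp -> y \in U :\: Comp -> walk e (U :\: Comp) x y.
  by move=> x y xR yR; exact: H.
move=> x y xR yR.
have [z1 [z1S w1]] := rest_reach xR.
have [z2 [z2S w2]] := rest_reach yR.
apply: walk_cat w1 _; apply: walk_cat (walk_sub sR (cS0 z1S z2S)) _.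
exact: (walk_sym esym yR w2).
Qed.
End Separate.

End Walks2.

Section TreeFacts.
Variable V : finType.
Variable e : rel V.
Hypothesis tree : is_tree e.

Lemma tree_sym : symmetric e. Proof. by case: tree. Qed.
Lemma tree_irr : irreflexive e. Proof. by case: tree => _ []. Qed.

Lemma upath_ex x y : exists p, upath e x p y.
Proof. by case: tree => _ [_ /(_ x y) [p [hp _]]]; exists p. Qed.

Lemma upath_uniq x y p q : upath e x p y -> upath e x q y -> p = q.
Proof.
case: tree => _ [_ /(_ x y) [p0 [hp0 u]]] hp hq.
by rewrite -(u _ hp) -(u _ hq).
Qed.

Lemma connected_T : connected e setT.
Proof.
move=> x y _ _; have [p /and3P[p1 _ /eqP p3]] := upath_ex x y.
by exists p; split => //; apply/allP => z; rewrite inE.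
Qed.

Lemma upath_prefix x p y u : upath e x p y -> u \in x :: p ->
  exists p1 p2, [/\ p = p1 ++ p2, upath e x p1 u & (u != y -> p2 != [::])].
Proof.
move=> hp ux; case/splitPl: ux hp => p1 p2 lu /and3P[pp up /eqP ly].
exists p1, p2; split => //.
  apply/and3P; split.
  - by move: pp; rewrite cat_path => /andP[].
  - by move: up; rewrite -cat_cons cat_uniq => /andP[].
  - by rewrite lu.
by move=> uy; apply/eqP => p20; move: ly uy; rewrite p20 cats0 -lu => ->; rewrite eqxx.
Qed.

Lemma upath_pred x p y u : upath e x p y -> e u y -> u \in x :: p ->
  exists q, p = rcons q y /\ upath e x q u.
Proof.
move=> hp euy ux.
have uy : u != y by apply/eqP => uy; move: euy; rewrite uy tree_irr.
have [p1 [p2 [pe hp1 np2]]] := upath_prefix hp ux.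
have {np2} np2 := np2 uy.
move: (hp) => /and3P[pp up /eqP ly].
move: (hp1) => /and3P[pp1 up1 /eqP lp1].
have yp2 : y \in p2.
  case: p2 pe np2 => [//|z p2'] pe _.
  by move: ly; rewrite pe last_cat lp1 /= => <-; apply: mem_last.
have hq : upath e x (rcons p1 y) y.
  apply/and3P; split.
  - by rewrite rcons_path pp1 lp1 euy.
  - rewrite -rcons_cons rcons_uniq up1 andbT.
    move: up; rewrite pe -cat_cons cat_uniq => /and3P[_ /hasPn hn _].
    exact: hn.
  - by rewrite last_rcons.
exists p1; split => //; exact: upath_uniq hp hq.
Qed.

Section Root.
Variables (r a s : V) (Tb : {set V}).
Hypothesis ar : a != r.
Hypothesis esa : e s a.
Hypothesis rsa : on_path e r s a.
Hypothesis Tbdef : forall v, v \in Tb <-> on_path e r a v.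

Lemma aTb : a \in Tb.
Proof.
apply/Tbdef; have [p hp] := upath_ex r a; exists p; split => //.
by move: hp => /and3P[_ _ /eqP <-]; apply: mem_last.
Qed.

Lemma path_to_a : exists q, upath e r (rcons q a) a /\ upath e r q s.
Proof.
case: rsa => p [hp sp]; have [q [pe hq]] := upath_pred hp esa sp.
by exists q; split => //; rewrite -pe.
Qed.

Lemma sTb : s \notin Tb.
Proof.
apply/negP => /Tbdef [p [hp ap]].
have [q [hqa hq]] := path_to_a.
have pq := upath_uniq hp hq; subst p.
by move: hqa => /and3P[_ u _]; move: u; rewrite -rcons_cons rcons_uniq ap.
Qed.

Lemma bridge_T x y : e x y -> x \in Tb -> y \notin Tb -> x = a /\ y = s.
Proof.
move=> exy /Tbdef [px [hpx apx]] yT.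
have nay : ~ on_path e r a y by move=> h; move: yT; rewrite (proj2 (Tbdef y) h).
have eyx : e y x by rewrite tree_sym.
case: (boolP (y \in r :: px)) => yin.
  have [q [pe hq]] := upath_pred hpx eyx yin.
  move: apx; rewrite pe -rcons_cons mem_rcons inE => /orP[/eqP ax|aq]; last first.
    by case: nay; exists q.
  subst x.
  have [q' [hq'a hq']] := path_to_a.
  have qq : rcons q a = rcons q' a by rewrite -pe; exact: upath_uniq hpx hq'a.
  have qq2 := @rcons_injl _ a _ _ qq; rewrite -qq2 in hq'.
  move: hq hq' => /and3P[_ _ /eqP <-] /and3P[_ _ /eqP <-]; by [].
exfalso; apply: nay; exists (rcons px y); split.
  move: hpx => /and3P[pp up /eqP lp]; apply/and3P; split.
  - by rewrite rcons_path pp lp exy.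
  - by rewrite -rcons_cons rcons_uniq yin up.
  - by rewrite last_rcons.
by rewrite -rcons_cons mem_rcons inE apx orbT.
Qed.
End Root.
End TreeFacts.

Section NewTreeFacts.
Variables (V : finType) (e : rel V) (Tb : {set V}) (s : V).
Hypothesis esym : symmetric e.
Hypothesis sTb : s \notin Tb.

Local Notation ne := (new_edge e Tb s).
Local Notation hatV := (hatV Tb).
Local Notation newV := (newV Tb).

Lemma new_sym : symmetric ne.
Proof.
by move=> [x|[]] [y|[]] //=; rewrite esym.
Qed.

Definition sh : hatV := Sub s sTb.
Definition Xn : {set newV} := [set x | ~~ is_inl x].

Lemma new_bridge x y : ne x y -> x \in Xn -> y \notin Xn -> x = inr false /\ y = inl sh.
Proof.
rewrite !inE; case: x => [x|[]] //; case: y => [y|[]] //= /eqP ys _ _.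
by split => //; congr inl; apply: val_inj.
Qed.

Lemma new_eut : ne (inr false) (inl sh). Proof. by rewrite /= eqxx. Qed.

Definition liftv (v : V) : newV :=
  match insub v with Some h => inl h | None => inr false end.

Lemma liftv_val (h : hatV) : liftv (val h) = inl h.
Proof. by rewrite /liftv valK. Qed.

Lemma liftv_notin v (H : v \notin Tb) : liftv v = inl (Sub v H).
Proof. by rewrite /liftv insubT. Qed.

Definition projv (x : newV) : V := match x with inl h => val h | inr _ => s end.

Definition liftS (S : {set V}) : {set newV} :=
  [set x : newV | match x with inl h => val h \in S | inr _ => false end].

Lemma proj_walk (S : {set V}) x' p : path ne x' p -> all (fun u => u \in liftS S) p ->
  is_inl x' ->
  [/\ path e (projv x') (map projv p), all (fun u => u \in S) (map projv p)
    & last (projv x') (map projv p) = projv (last x' p)].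
Proof.
elim: p x' => [|z p IH] x' //=.
move=> /andP[ez pz] /andP[zS pS] ix.
case: z ez pz zS => [hz|bz] ez pz zS; last by move: zS; rewrite inE.
have [q1 q2 q3] := IH _ pz pS erefl.
case: x' ez ix => [hx'|bx'] ez ix //.
move: ez => /= ez.
by rewrite ez q1 q2 q3; move: zS; rewrite inE => ->.
Qed.

Lemma liftS_conn (S : {set V}) : S \subset ~: Tb ->
  connected e S <-> connected ne (liftS S).
Proof.
move=> sS; split.
  move=> cS [hx|bx] [hy|by_] //; rewrite !inE // => hxS hyS.
  have [p [p1 p2 p3]] := cS _ _ hxS hyS.
  exists (map liftv p).
  elim: p hx hxS p1 p2 p3 => [|z p IH] hx hxS /=.
    by move=> _ hl _; split => //; congr inl; apply: val_inj.
  move=> /andP[ez pz] lz /andP[zS pS].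
  have zT : z \notin Tb by have := subsetP sS _ zS; rewrite inE.
  have [q1 q2 q3] := IH (Sub z zT) zS pz lz pS.
  by rewrite liftv_notin /= ez q1 q2 !inE zS q3.
move=> cS x y xS yS.
have xT : x \notin Tb by have := subsetP sS _ xS; rewrite inE.
have yT : y \notin Tb by have := subsetP sS _ yS; rewrite inE.
have hx : inl (Sub x xT) \in liftS S by rewrite inE.
have hy : inl (Sub y yT) \in liftS S by rewrite inE.
have [p [p1 p2 p3]] := cS _ _ hx hy.
exists (map projv p).
have [q1 [q2 q3]] := proj_walk p1 p3 (erefl true).
by move: q1 q2 q3; rewrite p2.
Qed.
End NewTreeFacts.

From Stdlib Require Import Classical.
From mathcomp Require Import lra.
Import Order.TTheory GRing.Theory Num.Theory.
Local Open Scope ring_scope.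

Section Costs.
Variables (R : realFieldType) (V : finType) (K : eqType).
Variables (C : V -> option K) (w : V -> R).
Implicit Types (S : {set V}) (f g : V -> K).

Lemma cost_le S f g : (forall v, v \in S -> 0 <= w v) ->
  (forall v, v \in S -> f v != g v -> C v != Some (g v)) ->
  cost_on C w S f <= cost_on C w S g.
Proof.
move=> w0 h; rewrite /cost_on [X in X <= _]big_mkcond [X in _ <= X]big_mkcond /=.
apply: ler_sum => v _; case vS: (v \in S) => /=; last by [].
case: (boolP ((C v != None) && (C v != Some (f v)))) => [/andP[c1 c2]|_].
  case: (eqVneq (f v) (g v)) => [<-|fg]; first by rewrite c1 c2.
  by rewrite c1 (h v vS fg).
by case: ifP => // _; apply: w0.
Qed.

Lemma cost_eq S f g : (forall v, v \in S -> f v = g v) ->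
  cost_on C w S f = cost_on C w S g.
Proof.
move=> h; rewrite /cost_on; apply: eq_bigl => v.
by case vS: (v \in S) => //=; rewrite h.
Qed.

Lemma cost_split S f : cost_on C w setT f = cost_on C w S f + cost_on C w (~: S) f.
Proof.
rewrite /cost_on (bigID (fun v => v \in S)) /=; congr (_ + _); apply: eq_bigl => v;
by rewrite !inE /= andbC.
Qed.

Definition misset f : {set V} := [set v | (C v != None) && (C v != Some (f v))].

Lemma cost_misset f : cost_on C w setT f = \sum_(v in misset f) w v.
Proof. by rewrite /cost_on; apply: eq_bigl => v; rewrite !inE. Qed.
End Costs.

Lemma argmin_seq (R : realFieldType) (I : eqType) (P : I -> Prop) (F : I -> R) (s : seq I) :
  (exists i, i \in s /\ P i) -> exists i, P i /\ forall j, j \in s -> P j -> F i <= F j.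
Proof.
elim: s => [|x s IH]; first by case=> i [].
move=> [i [+ Pi]]; rewrite inE => /orP[/eqP ix|iS].
  case: (classic (exists i, i \in s /\ P i)) => [/IH [i0 [P0 m0]]|none].
    case: (leP (F x) (F i0)) => hx.
      exists x; split; first by rewrite -ix.
      move=> j; rewrite inE => /orP[/eqP ->|js] Pj //; exact: le_trans hx (m0 j js Pj).
    exists i0; split => // j; rewrite inE => /orP[/eqP ->|js] Pj; last exact: m0.
    exact: ltW.
  exists x; split; first by rewrite -ix.
  move=> j; rewrite inE => /orP[/eqP ->|js] Pj //.
  by case: none; exists j.
have [i0 [P0 m0]] := IH (ex_intro _ i (conj iS Pi)).
case: (classic (P x)) => Px.
  case: (leP (F x) (F i0)) => hx.
    exists x; split => // j; rewrite inE => /orP[/eqP ->|js] Pj //; exact: le_trans hx (m0 j js Pj).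
  exists i0; split => // j; rewrite inE => /orP[/eqP ->|js] Pj; last exact: m0.
  exact: ltW.
exists i0; split => // j; rewrite inE => /orP[/eqP ->|js] Pj; last exact: m0.
by [].
Qed.

Lemma argmin_fin (R : realFieldType) (I : finType) (P : I -> Prop) (F : I -> R) :
  (exists i, P i) -> exists i, P i /\ forall j, P j -> F i <= F j.
Proof.
move=> [i Pi]; have [i0 [P0 m0]] := argmin_seq F (s := enum I) (ex_intro _ i (conj (mem_enum _ i) Pi)).
by exists i0; split => // j Pj; apply: m0 => //; rewrite mem_enum.
Qed.

Lemma sum_hatV (R : realFieldType) (V : finType) (Tb : {set V}) (P : pred V) (F : V -> R) :
  \sum_(h : hatV Tb | P (val h)) F (val h) = \sum_(v | (v \notin Tb) && P v) F v.
Proof.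
rewrite [RHS](eq_bigl (fun v => (v \in [pred v | v \notin Tb]) && P v)) // big_sub_cond.
reflexivity.
Qed.

Section Main.
Variables (R : realFieldType) (V : finType) (K : eqType) (e : rel V) (w : V -> R)
  (C : V -> option K) (r a s : V) (Tb : {set V}) (d0 d' : K) (Cmed Cmin : V -> K).
Hypothesis tree : is_tree e.
Hypothesis w0 : forall v, 0 <= w v.
Hypothesis ar : a != r.
Hypothesis esa : e s a.
Hypothesis rsa : on_path e r s a.
Hypothesis Tbdef : forall v, v \in Tb <-> on_path e r a v.
Hypothesis dd : d' != d0.
Hypothesis Ccol : forall v c, v \in Tb -> C v = Some c -> c = d0 \/ c = d'.
Hypothesis noH : forall v, v \notin Tb -> C v != Some d0.
Hypothesis Cmin_col : forall v, v \in Tb -> Cmin v = d0 \/ Cmin v = d'.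
Hypothesis Cmin_conv : convex_on e Tb Cmin.
Hypothesis Cmin_min : forall f : V -> K, (forall v, v \in Tb -> f v = d0 \/ f v = d') ->
      convex_on e Tb f -> cost_on C w Tb Cmin <= cost_on C w Tb f.
Hypothesis Cmed_col : forall v, v \in Tb -> Cmed v = d0 \/ Cmed v = d'.
Hypothesis Cmed_conv : convex_on e Tb Cmed.
Hypothesis Cmed_form : (forall v, v \in Tb -> Cmed v = d0) \/ Cmed a = d'.
Hypothesis Cmed_min : forall f : V -> K, (forall v, v \in Tb -> f v = d0 \/ f v = d') ->
      convex_on e Tb f ->
      ((forall v, v \in Tb -> f v = d0) \/ f a = d') ->
      cost_on C w Tb Cmed <= cost_on C w Tb f.

Local Notation high := (cost_on C w Tb (fun _ => d0)).
Local Notation med := (cost_on C w Tb Cmed).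
Local Notation mn := (cost_on C w Tb Cmin).
Local Notation w1r := (med - mn).
Local Notation w1v := (high - mn).
Local Notation ne := (new_edge e Tb s).
Local Notation nC := (new_C Tb C w1r w1v d0 d').
Local Notation nw := (new_w Tb w w1r w1v).

Lemma esym : symmetric e. Proof. exact: tree_sym tree. Qed.
Lemma eas : e a s. Proof. by rewrite esym. Qed.
Lemma sTb' : s \notin Tb. Proof. exact: (sTb tree esa rsa Tbdef). Qed.
Lemma aTb' : a \in Tb. Proof. exact: (aTb tree Tbdef). Qed.
Lemma bridgeT x y : e x y -> x \in Tb -> y \notin Tb -> x = a /\ y = s.
Proof. exact: (bridge_T tree esa rsa Tbdef). Qed.

Lemma conTb : connected e Tb.
Proof.
have [h _] := bridge_split1 esym bridgeT (connected_T tree).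
by move: h; rewrite setTI.
Qed.

Lemma conH : connected e (~: Tb).
Proof.
have [_ h] := bridge_split1 esym bridgeT (connected_T tree).
by move: h; rewrite setTI.
Qed.

Lemma clsTb (f : V -> K) (k : K) : [set v in setT | f v == k] :&: Tb = [set v in Tb | f v == k].
Proof. by apply/setP => v; rewrite !inE andbC. Qed.
Lemma clsH (f : V -> K) (k : K) : [set v in setT | f v == k] :&: ~: Tb = [set v in ~: Tb | f v == k].
Proof. by apply/setP => v; rewrite !inE andbC. Qed.

Lemma splitT1 (f : V -> K) (k : K) : convex_on e setT f ->
  connected e [set v in Tb | f v == k] /\ connected e [set v in ~: Tb | f v == k].
Proof.
move=> cf; have [h1 h2] := bridge_split1 esym bridgeT (@cf k).
by rewrite -clsTb -clsH.
Qed.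

Lemma splitT2 (f : V -> K) (k : K) x y : convex_on e setT f -> x \in Tb -> f x = k -> y \notin Tb -> f y = k ->
  f a = k /\ f s = k.
Proof.
move=> cf xT fx yT fy.
have [] := bridge_split2 bridgeT (@cf k) (x := x) (y := y); rewrite ?inE ?fx ?fy ?eqxx //.
by move=> /eqP -> /eqP ->.
Qed.

Lemma combine_conv (gH h : V -> K) :
  (forall k, connected e [set v in ~: Tb | gH v == k]) -> convex_on e Tb h ->
  (forall k, (exists v, v \notin Tb /\ gH v = k) -> (exists v, v \in Tb /\ h v = k) ->
     gH s = k /\ h a = k) ->
  convex_on e setT (fun v => if v \in Tb then h v else gH v).
Proof.
move=> cg ch hc k.
apply: (bridge_glue esym eas (X := Tb) (S := [set v in setT | (if v \in Tb then h v else gH v) == k])).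
- apply: (connected_eq (A := [set v in Tb | h v == k])); last exact: ch.
  by apply/setP => v; rewrite !inE; case: (v \in Tb); rewrite /= ?andbT ?andbF.
- apply: (connected_eq (A := [set v in ~: Tb | gH v == k])); last exact: cg.
  by apply/setP => v; rewrite !inE; case: (v \in Tb); rewrite /= ?andbT ?andbF.
- move=> [x xS] [y yS]; move: xS yS; rewrite !inE => /andP[/andP[_ hx] xT] /andP[/andP[_ gy] yT].
  rewrite xT in hx; rewrite (negbTE yT) in gy.
  have [h1 h2] := hc k (ex_intro _ y (conj yT (eqP gy))) (ex_intro _ x (conj xT (eqP hx))).
  by rewrite aTb' h2 (negbTE sTb') h1 !eqxx.
- exact: aTb'.
- exact: sTb'.
Qed.

Lemma conv_const : convex_on e Tb (fun _ => d0).
Proof.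
move=> k; case: (eqVneq d0 k) => [_|nk].
  by apply: (connected_eq (A := Tb)); [apply/setP => v; rewrite !inE andbT | exact: conTb].
apply: (connected_eq (A := set0)); last exact: connected0.
by apply/setP => v; rewrite !inE andbF.
Qed.

Lemma mn_med : mn <= med.
Proof. exact: Cmin_min. Qed.
Lemma med_high : med <= high.
Proof. apply: Cmed_min; [by move=> *; left | exact: conv_const | by left]. Qed.
Lemma w1r_ge0 : 0 <= w1r. Proof. by rewrite subr_ge0 mn_med. Qed.
Lemma w1v_ge0 : 0 <= w1v. Proof. by rewrite subr_ge0 (le_trans mn_med med_high). Qed.

Definition newcol (fH : V -> K) (A B : K) : newV Tb -> K :=
  fun x => match x with inl h => fH (val h) | inr false => A | inr true => B end.

Lemma Xn_conn (S : {set newV Tb}) : connected ne (S :&: Xn Tb).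
Proof.
move=> x y; rewrite !inE => /andP[_ xX] /andP[yS yX].
case: x y xX yX yS => [//|[]] [//|[]] // _ _ yS.
- by apply: walk_refl.
- by apply: walk_edge; rewrite // !inE yS.
- by apply: walk_edge; rewrite // !inE yS.
- by apply: walk_refl.
Qed.

Lemma clsnX (g : newV Tb -> K) k :
  [set x in setT | g x == k] :&: ~: Xn Tb = liftS Tb [set v in ~: Tb | g (liftv Tb v) == k].
Proof.
apply/setP => [[h|[]]]; rewrite !inE /= ?andbF //.
by rewrite andbT (valP h) liftv_val.
Qed.

Lemma Tn_conn : connected ne setT.
Proof.
apply: (bridge_glue (@new_sym _ e Tb s esym) (new_eut e sTb') (X := Xn Tb) (S := setT)).
- exact: Xn_conn.
- have -> : [set: newV Tb] :&: ~: Xn Tb = liftS Tb (~: Tb).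
    by apply/setP => [[h|[]]]; rewrite !inE //= (valP h).
  exact: (proj1 (@liftS_conn V e Tb s (~: Tb) (subxx _)) conH).
- by rewrite !inE.
- by rewrite !inE.
- by rewrite !inE.
Qed.

Lemma newcol_conv (fH : V -> K) (A B : K) :
  (forall k, connected e [set v in ~: Tb | fH v == k]) ->
  (forall k, (exists v, v \notin Tb /\ fH v = k) -> (A = k \/ B = k) -> fH s = k /\ A = k) ->
  convex_on ne setT (newcol fH A B).
Proof.
move=> cf hc k.
apply: (bridge_glue (@new_sym _ e Tb s esym) (new_eut e sTb') (X := Xn Tb) (S := [set x in setT | newcol fH A B x == k])).
- exact: Xn_conn.
- rewrite clsnX.
  apply: (connected_eq (A := liftS Tb [set v in ~: Tb | fH v == k])).
    by apply/setP => [[h|[]]]; rewrite !inE //= liftv_val.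
  have sub : [set v in ~: Tb | fH v == k] \subset ~: Tb by apply/subsetP => v; rewrite inE => /andP[].
  exact: (proj1 (@liftS_conn V e Tb s _ sub) (cf k)).
- move=> [x xS] [y yS]; move: xS yS; rewrite !inE => /andP[/andP[_ xk] xX] /andP[/andP[_ yk] yX].
  case: x xk xX => [//|bx] xk _; case: y yk yX => [hy|//] yk _.
  have [h1 h2] : fH s = k /\ A = k.
    apply: hc; first by exists (val hy); split; [exact: (valP hy) | exact/eqP].
    by case: bx xk => /= /eqP xk; [right|left].
  by rewrite /= h1 h2 eqxx.
- by rewrite !inE.
- by rewrite !inE.
Qed.

Definition pen (A B : K) : R := (if A == d0 then 0 else w1r) + (if B == d' then 0 else w1v).

Lemma pen_part (x : R) (c c' : K) : 0 <= x ->
  (if ((if 0 < x then Some c else None) != None) && ((if 0 < x then Some c else None) != Some c')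
   then x else 0) = (if c' == c then 0 else x).
Proof.
move=> hx; case: (boolP (0 < x)) => px /=.
  case: (eqVneq c' c) => [->|ne1]; first by rewrite eqxx.
  by rewrite (inj_eq Some_inj) eq_sym ne1.
have -> : x = 0 by apply/eqP; rewrite eq_le hx andbT leNgt px.
by case: ifP.
Qed.

Lemma costN_split (g : newV Tb -> K) :
  cost_on nC nw setT g = cost_on C w (~: Tb) (fun v => g (liftv Tb v)) + pen (g (inr false)) (g (inr true)).
Proof.
rewrite /pen; have h1 := w1r_ge0; have h2 := w1v_ge0.
set x1 := w1r in h1 *; set x2 := w1v in h2 *.
rewrite /cost_on big_sumType /=; congr (_ + _).
  rewrite (eq_bigl (fun h : hatV Tb => (fun v => (C v != None) && (C v != Some (g (liftv Tb v)))) (val h))); last first.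
    by move=> h; rewrite inE /= liftv_val.
  rewrite (eq_bigr (fun i : hatV Tb => w (val i))) //.
  rewrite (@sum_hatV _ _ Tb (fun v => (C v != None) && (C v != Some (g (liftv Tb v)))) w).
  apply: eq_bigl => v; by rewrite inE.
rewrite big_mkcond big_bool /= !inE /= addrC; congr (_ + _); [exact: pen_part h1 | exact: pen_part h2].
Qed.


Lemma sep_col (h : V -> K) b : convex_on e Tb h -> b \in Tb -> h b = d' ->
  exists h', [/\ forall v, v \in Tb -> h' v = d0 \/ h' v = d', convex_on e Tb h',
     cost_on C w Tb h' <= cost_on C w Tb h & h' b = d'].
Proof.
move=> ch bT hb.
set S0 := [set v in Tb | h v == d0].
have bS0 : b \notin S0 by rewrite !inE hb (negbTE dd) andbF.
have sS0 : S0 \subset Tb by apply/subsetP => v; rewrite inE => /andP[].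
have cS0 : connected e S0 by exact: (@ch d0).
set S1 := [set v in Tb | h v == d'].
have sS1 : S1 \subset Tb :\: S0.
  by apply/subsetP => v; rewrite !inE => /andP[vT /eqP ->]; rewrite vT (negbTE dd).
have bS1 : b \in S1 by rewrite !inE bT hb eqxx.
have c1 := connected_Comp esym bT bS0.
have c2 := connected_rest esym conTb cS0 sS0 bT bS0.
have c3 := S1_Comp bT bS0 (@ch d') bS1 sS1.
have c4 := bComp e bT bS0.
have c5 := Comp_sub e Tb S0 b.
set Cp := Comp e Tb S0 b in c1 c2 c3 c4 c5.
clearbody Cp.
exists (fun v => if v \in Cp then d' else d0); split.
- by move=> v _; case: ifP; [right|left].
- move=> k.
  case: (eqVneq k d') => [->|kd'].
    apply: (connected_eq (A := Cp)); last exact: c1.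
    apply/setP => v; rewrite [RHS]inE; case vC: (v \in Cp); last by rewrite eq_sym (negbTE dd) andbF.
    by rewrite eqxx andbT; move: (subsetP c5 v vC); rewrite inE => /andP[].
  case: (eqVneq k d0) => [->|kd0].
    apply: (connected_eq (A := Tb :\: Cp)); last exact: c2.
    apply/setP => v; rewrite [RHS]inE in_setD; case vC: (v \in Cp) => /=.
      by rewrite (negbTE dd) andbF.
    by rewrite eqxx andbT.
  apply: (connected_eq (A := set0)); last exact: connected0.
  apply/setP => v; rewrite [RHS]inE inE; case: (v \in Cp).
    by rewrite eq_sym (negbTE kd') andbF.
  by rewrite eq_sym (negbTE kd0) andbF.
- apply: cost_le => [v _|v vT]; first exact: w0.
  move=> hne; apply/eqP => Cv; move: hne.
  case: (Ccol vT Cv) => hv.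
    have vC : v \notin Cp.
      apply/negP => vC; move: (subsetP c5 v vC); rewrite !inE hv eqxx vT.
      by [].
    by rewrite (negbTE vC) hv eqxx.
  have vC : v \in Cp by apply: (subsetP c3); rewrite !inE vT hv eqxx.
  by rewrite vC hv eqxx.
- by rewrite c4.
Qed.

Lemma L_min (h : V -> K) : convex_on e Tb h -> mn <= cost_on C w Tb h.
Proof.
move=> ch.
case: (boolP [exists b, (b \in Tb) && (h b == d')]) => [/existsP [b /andP[bT /eqP hb]]|none].
  have [h' [c1 c2 c3 _]] := sep_col ch bT hb.
  exact: le_trans (Cmin_min c1 c2) c3.
apply: le_trans (Cmin_min (f := fun _ => d0) _ conv_const) _; first by move=> *; left.
apply: cost_le => [v _|v vT]; first exact: w0.
move=> hne; apply/eqP => Cv.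
case: (Ccol vT Cv) => hv; first by move: hne; rewrite hv eqxx.
by move/existsPn: none => /(_ v); rewrite vT hv eqxx.
Qed.

Lemma L_med (h : V -> K) : convex_on e Tb h -> h a = d' -> med <= cost_on C w Tb h.
Proof.
move=> ch ha.
have [h' [c1 c2 c3 c4]] := sep_col ch aTb' ha.
exact: le_trans (Cmed_min c1 c2 (or_intror c4)) c3.
Qed.

Lemma newcol_lift (fH : V -> K) A B v : v \notin Tb -> newcol fH A B (liftv Tb v) = fH v.
Proof. by move=> vT; rewrite (liftv_notin vT). Qed.

Definition normT (f : V -> K) := forall v, v \notin Tb -> f v = d0 -> f a = d0.

Lemma dir1 (f : V -> K) : convex_on e setT f -> normT f ->
  exists g, convex_on ne setT g /\ cost_on nC nw setT g + mn <= cost_on C w setT f.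
Proof.
move=> cf nf.
have cH k : connected e [set v in ~: Tb | f v == k] by exact: (proj2 (splitT1 k cf)).
have cTbf : convex_on e Tb f by move=> k; exact: (proj1 (splitT1 k cf)).
rewrite (cost_split _ _ Tb f).
have cl A B : cost_on C w (~: Tb) (fun v => newcol f A B (liftv Tb v)) = cost_on C w (~: Tb) f.
  by apply: cost_eq => v; rewrite inE => vT; rewrite newcol_lift.
case: (boolP [exists y, (y \notin Tb) && (f y == d')]) => [/existsP [y /andP[yT /eqP fy]]|nD].
  case: (eqVneq (f a) d') => [fa|fa].
    exists (newcol f d' d'); split.
      apply: (newcol_conv cH) => k [v [vT fv]] hk.
      have kd : k = d' by case: hk.
      rewrite kd in fv *; have [_ fs] := splitT2 cf aTb' fa vT fv; by split.
    rewrite costN_split cl /pen eqxx (negbTE dd).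
    have := L_med cTbf fa; lra.
  exists (newcol f d0 d0); split.
    apply: (newcol_conv cH) => k [v [vT fv]] hk.
    have kd : k = d0 by case: hk.
    rewrite kd in fv *; have fa0 := nf v vT fv.
    have [_ fs] := splitT2 cf aTb' fa0 vT fv; by split.
  rewrite costN_split cl /pen eqxx eq_sym (negbTE dd).
  have : high <= cost_on C w Tb f.
    apply: cost_le => [v _|v vT]; first exact: w0.
    move=> hne; apply/eqP => Cv.
    case: (Ccol vT Cv) => hv; first by move: hne; rewrite hv eqxx.
    have [fa' _] := splitT2 cf vT hv yT fy.
    by move: fa; rewrite fa' eqxx.
  lra.
exists (newcol f d0 d'); split.
  apply: (newcol_conv cH) => k [v [vT fv]] hk.
  case: hk => hk; rewrite -hk in fv *.
    have fa0 := nf v vT fv.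
    have [_ fs] := splitT2 cf aTb' fa0 vT fv; by split.
  by move/existsPn: nD => /(_ v); rewrite vT fv eqxx.
rewrite costN_split cl /pen !eqxx.
have := L_min cTbf; lra.
Qed.

Definition normN (g : newV Tb -> K) := forall v, v \notin Tb -> g (liftv Tb v) = d0 -> g (inr false) = d0.

Lemma combine_cost (gH h : V -> K) :
  cost_on C w setT (fun v => if v \in Tb then h v else gH v) = cost_on C w Tb h + cost_on C w (~: Tb) gH.
Proof.
rewrite (cost_split _ _ Tb); congr (_ + _); apply: cost_eq => v; rewrite ?inE => vT.
  by rewrite vT.
by rewrite (negbTE vT).
Qed.

Lemma liftv_s : liftv Tb s = inl (sh sTb').
Proof. by rewrite (liftv_notin sTb'). Qed.

Lemma dir2 (g : newV Tb -> K) : convex_on ne setT g -> normN g ->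
  exists f, convex_on e setT f /\ cost_on C w setT f <= cost_on nC nw setT g + mn.
Proof.
move=> cg ng.
set gH := fun v => g (liftv Tb v).
have cHg k : connected e [set v in ~: Tb | gH v == k].
  have [_ h2] := bridge_split1 (@new_sym _ e Tb s esym) (new_bridge sTb') (@cg k).
  move: h2; rewrite clsnX.
  have sub : [set v in ~: Tb | gH v == k] \subset ~: Tb by apply/subsetP => v; rewrite inE => /andP[].
  exact: (proj2 (@liftS_conn V e Tb s _ sub)).
have sp2 k : (exists v, v \notin Tb /\ gH v = k) -> (g (inr false) = k \/ g (inr true) = k) ->
    gH s = k /\ g (inr false) = k.
  move=> [v [vT gv]] hk.
  have [] := bridge_split2 (new_bridge sTb') (@cg k) (x := inr (~~ (g (inr false) == k))) (y := liftv Tb v).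
  - rewrite !inE /=; case: (eqVneq (g (inr false)) k) => [->|ne1] /=; first by rewrite eqxx.
    by case: hk => hk; [rewrite hk eqxx in ne1 | rewrite hk eqxx].
  - by rewrite !inE.
  - by rewrite !inE; move: gv; rewrite /gH => ->; rewrite eqxx.
  - by rewrite (liftv_notin vT) !inE.
  by rewrite !inE /= /gH liftv_s => /eqP -> /eqP ->.
rewrite costN_split -/gH /pen.
have hr := w1r_ge0; have hv := w1v_ge0.
case: (eqVneq (g (inr false)) d0) => [A0|A0]; case: (eqVneq (g (inr true)) d') => [B0|B0].
-
  have noD v : v \notin Tb -> gH v != d'.
    move=> vT; apply/eqP => gv; have [_ A'] := sp2 d' (ex_intro _ v (conj vT gv)) (or_intror B0).
    by move: dd; rewrite -A' A0 eqxx.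
  set c := Cmin a.
  have cc : c = d0 \/ c = d' by exact: Cmin_col aTb'.
  set gH' := fun v => if gH v == d0 then c else gH v.
  exists (fun v => if v \in Tb then Cmin v else gH' v); split.
    apply: combine_conv => //.
    + move=> k; case: cc => cc.
        apply: (connected_eq (A := [set v in ~: Tb | gH v == k])); last exact: cHg.
        have e1 v : gH' v = gH v by rewrite /gH' cc; case: eqP => [->|].
        by apply/setP => v; rewrite !inE e1.
      case: (eqVneq k d') => [->|kd'].
        apply: (connected_eq (A := [set v in ~: Tb | gH v == d0])); last exact: cHg.
        apply/setP => v; rewrite !inE /gH' cc; case vT: (v \in Tb) => //=.
        case: (eqVneq (gH v) d0) => [_|ne0]; first by rewrite !eqxx.
        by rewrite (negbTE (noD v (negbT vT))).
      case: (eqVneq k d0) => [->|kd0].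
        apply: (connected_eq (A := set0)); last exact: connected0.
        apply/setP => v; rewrite !inE /gH' cc; case: (eqVneq (gH v) d0) => [_|ne0] /=.
          by rewrite (negbTE dd) andbF.
        by rewrite (negbTE ne0) andbF.
      apply: (connected_eq (A := [set v in ~: Tb | gH v == k])); last exact: cHg.
      apply/setP => v; rewrite !inE /gH' cc; case: (eqVneq (gH v) d0) => [E|ne0] //=.
      by rewrite E eq_sym (negbTE kd0) eq_sym (negbTE kd').
    + move=> k [v [vT gv]] [u [uT cu]].
      move: gv; rewrite /gH'; case: eqP => [g0 ck|gn gk].
        have [gs _] := sp2 d0 (ex_intro _ v (conj vT g0)) (or_introl A0).
        by rewrite /gH' gs eqxx -ck.
      case: (Cmin_col uT) => cu'; rewrite cu' in cu; rewrite -cu in gk *.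
        by case: (gn gk).
      by move: (noD v vT); rewrite gk eqxx.
  rewrite combine_cost.
  have : cost_on C w (~: Tb) gH' <= cost_on C w (~: Tb) gH.
    apply: cost_le => [v _|v]; first exact: w0.
    rewrite inE => vT; rewrite /gH'; case: (eqVneq (gH v) d0) => [E|_]; last by rewrite eqxx.
    by rewrite E => _; exact: noH.
  lra.
-
  exists (fun v => if v \in Tb then d0 else gH v); split.
    apply: combine_conv => //; first exact: conv_const.
    move=> k [v [vT gv]] [u [uT cu]]; rewrite -cu in gv *.
    by have [gs _] := sp2 d0 (ex_intro _ v (conj vT gv)) (or_introl A0).
  rewrite combine_cost; lra.
-
  exists (fun v => if v \in Tb then Cmed v else gH v); split.
    apply: combine_conv => //.
    move=> k [v [vT gv]] [u [uT cu]].
    case: (Cmed_col uT) => cu'; rewrite cu' in cu; rewrite -cu in gv *.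
      by move: A0; rewrite (ng v vT gv) eqxx.
    have [gs A'] := sp2 d' (ex_intro _ v (conj vT gv)) (or_intror B0).
    split => //; case: Cmed_form => // allc.
    by move: dd; rewrite -cu' (allc u uT) eqxx.
  rewrite combine_cost; lra.
-
  exists (fun v => if v \in Tb then d0 else gH v); split.
    apply: combine_conv => //; first exact: conv_const.
    move=> k [v [vT gv]] [u [uT cu]]; rewrite -cu in gv *.
    by move: A0; rewrite (ng v vT gv) eqxx.
  rewrite combine_cost; lra.
Qed.


Lemma normT_ex (f : V -> K) : convex_on e setT f ->
  exists f', [/\ convex_on e setT f', normT f' & cost_on C w setT f' <= cost_on C w setT f].
Proof.
move=> cf.
case: (eqVneq (f a) d0) => [fa|fa]; first by exists f; split.
case: (boolP [exists v, (v \notin Tb) && (f v == d0)]) => [/existsP [v /andP[vT /eqP fv]]|none]; last first.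
  exists f; split => // u uT fu.
  by move/existsPn: none => /(_ u); rewrite uT fu eqxx.
have [c [cd cf']] := normalize esym (connected_T tree) cf fv fa.
exists (fun u => if f u == d0 then c else f u); split => //.
  move=> u _; case: (eqVneq (f u) d0) => [_ E|ne0 E]; first by move: cd; rewrite E eqxx.
  by move: ne0; rewrite E eqxx.
apply: cost_le => [u _|u _]; first exact: w0.
case: (eqVneq (f u) d0) => [E|_]; last by rewrite eqxx.
move=> _; rewrite E; apply: noH; apply/negP => uT.
have [fa' _] := splitT2 cf uT E vT fv.
by move: fa; rewrite fa' eqxx.
Qed.

Lemma nw_ge0 x : 0 <= nw x.
Proof. by case: x => [h|[]] /=; [exact: w0 | exact: w1v_ge0 | exact: w1r_ge0]. Qed.

Lemma normN_ex (g : newV Tb -> K) : convex_on ne setT g ->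
  exists g', [/\ convex_on ne setT g', normN g' & cost_on nC nw setT g' <= cost_on nC nw setT g].
Proof.
move=> cg.
case: (eqVneq (g (inr false)) d0) => [A0|A0]; first by exists g; split.
case: (boolP [exists v, (v \notin Tb) && (g (liftv Tb v) == d0)]) => [/existsP [v /andP[vT /eqP gv]]|none]; last first.
  exists g; split => // u uT gu.
  by move/existsPn: none => /(_ u); rewrite uT gu eqxx.
have [c [cd cg']] := normalize (@new_sym _ e Tb s esym) Tn_conn cg gv A0.
exists (fun u => if g u == d0 then c else g u); split => //.
  move=> u _; case: (eqVneq (g (liftv Tb u)) d0) => [_ E|ne0 E]; first by move: cd; rewrite E eqxx.
  by move: ne0; rewrite E eqxx.
apply: cost_le => [u _|u _]; first exact: nw_ge0.
case: (eqVneq (g u) d0) => [E|_]; last by rewrite eqxx.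
move=> _; rewrite E.
case: u E => [h|[]] E /=.
- by apply: noH; exact: (valP h).
- by case: ifP => // _; rewrite (inj_eq Some_inj).
- by move: A0; rewrite E eqxx.
Qed.

Lemma conv_constT : convex_on e setT (fun _ => d0).
Proof.
move=> k; case: (eqVneq d0 k) => [_|nk].
  by apply: (connected_eq (A := setT)); [apply/setP => v; rewrite !inE | exact: connected_T].
apply: (connected_eq (A := set0)); last exact: connected0.
by apply/setP => v; rewrite !inE.
Qed.

Lemma main_sec : exists o, OPT_is e C w o /\ OPT_is ne nC nw (o - mn).
Proof.
have [X [[f0 [cf0 mf0]] Xmin]] := argmin_fin (P := fun X => exists f, convex_on e setT f /\ misset C f = X)
  (fun X => \sum_(v in X) w v) (ex_intro _ _ (ex_intro _ (fun _ => d0) (conj conv_constT erefl))).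
have optT f : convex_on e setT f -> cost_on C w setT f0 <= cost_on C w setT f.
  move=> cf; rewrite !cost_misset mf0; apply: Xmin; by exists f.
have low g : convex_on ne setT g -> cost_on C w setT f0 - mn <= cost_on nC nw setT g.
  move=> cg; have [g' [cg' ng' le1]] := normN_ex cg.
  have [f [cf le2]] := dir2 cg' ng'.
  have := optT f cf; lra.
exists (cost_on C w setT f0); split.
  by split; [exists f0 | exact: optT].
split => //.
have [f' [cf' nf' le1]] := normT_ex cf0.
have [g [cg le2]] := dir1 cf' nf'.
exists g; split => //.
apply/eqP; rewrite eq_le low // andbT; lra.
Qed.

End Main.

Theorem mainTheorem9 (R : realFieldType) (V : finType) (K : eqType)
  (e : rel V) (r : V) (w : V -> R) (C : V -> option K)
  (rd : K -> V) (d0 d' : K) (s : V) (Tb : {set V}) (Cmed Cmin : V -> K) :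
  is_tree e ->
  (forall v, 0 <= w v) ->
  (* Domain(C) = support(w) *)
  (forall v, (C v != None) = (0 < w v)) ->
  (* (i) *)
  ~ (exists x y z, [/\ 0 < w x /\ 0 < w y /\ 0 < w z, on_path e x y z,
                       C x = C z & C x != C y]) ->
  (* (ii) *)
  ~ (exists v d1 d2 d3, [/\ [/\ d1 != d2, d1 != d3 & d2 != d3],
        in_carrier e C d1 v, in_carrier e C d2 v & in_carrier e C d3 v]) ->
  (* r_d is the root of carrier(d,C), for every colour d used by C *)
  (forall d, (exists v, C v = Some d) -> carrier_root e r C d (rd d)) ->
  (* d0 is a colour whose r_{d0} is at maximum distance from r *)
  (exists v, C v = Some d0) ->
  (forall d n m, (exists v, C v = Some d) ->
      dist_is e r (rd d) n -> dist_is e r (rd d0) m -> (n <= m)%N) ->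
  rd d0 != r ->
  (* s is the parent of r_{d0} *)
  e s (rd d0) -> on_path e r s (rd d0) ->
  (* Tb = V(bar T): descendants of r_{d0}, including r_{d0} *)
  (forall v, v \in Tb <-> on_path e r (rd d0) v) ->
  (* C(V(bar T)) = {d0, d'} *)
  d' != d0 ->
  (forall v c, v \in Tb -> C v = Some c -> c = d0 \/ c = d') ->
  (exists v, v \in Tb /\ C v = Some d0) ->
  (exists v, v \in Tb /\ C v = Some d') ->
  in_carrier e C d0 (rd d0) -> in_carrier e C d' (rd d0) ->
  (* C_min *)
  (forall v, v \in Tb -> Cmin v = d0 \/ Cmin v = d') ->
  convex_on e Tb Cmin ->
  (forall f : V -> K, (forall v, v \in Tb -> f v = d0 \/ f v = d') ->
      convex_on e Tb f -> cost_on C w Tb Cmin <= cost_on C w Tb f) ->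
  (* C_medium *)
  (forall v, v \in Tb -> Cmed v = d0 \/ Cmed v = d') ->
  convex_on e Tb Cmed ->
  ((forall v, v \in Tb -> Cmed v = d0) \/ Cmed (rd d0) = d') ->
  (forall f : V -> K, (forall v, v \in Tb -> f v = d0 \/ f v = d') ->
      convex_on e Tb f ->
      ((forall v, v \in Tb -> f v = d0) \/ f (rd d0) = d') ->
      cost_on C w Tb Cmed <= cost_on C w Tb f) ->
  let costHigh := cost_on C w Tb (fun _ => d0) in
  let costMed := cost_on C w Tb Cmed in
  let costMin := cost_on C w Tb Cmin in
  let w1r := costMed - costMin in
  let w1v := costHigh - costMin in
  exists o : R,
    OPT_is e C w o /\
    OPT_is (new_edge e Tb s) (new_C Tb C w1r w1v d0 d')
           (new_w Tb w w1r w1v) (o - costMin).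
Proof.
move=> tree w0 _ _ _ croot ex0 _ _ esa rsa Tbdef dd Ccol [z [zT Cz]] _ _ _
  Cmin_col Cmin_conv Cmin_min Cmed_col Cmed_conv Cmed_form Cmed_min.
have noH : forall v, v \notin Tb -> C v != Some d0.
  move=> v vT; apply/negP => /eqP Cv.
  have [_ mincr] := croot d0 ex0.
  have sC : in_carrier e C d0 s.
    move=> A cA hA.
    have [_ sA] := bridge_split2 (bridge_T tree esa rsa Tbdef) cA (hA z Cz) zT (hA v Cv) vT.
    exact: sA.
  have [q [hqa hq]] := path_to_a tree esa rsa.
  have := mincr s (size (rcons q (rd d0))) (size q) sC.
  have d1 : dist_is e r (rd d0) (size (rcons q (rd d0))) by exists (rcons q (rd d0)).
  have d2 : dist_is e r s (size q) by exists q.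
  by move=> /(_ d1 d2); rewrite size_rcons ltnn.
exact: (main_sec tree w0 esa rsa Tbdef dd Ccol noH Cmin_col Cmin_conv Cmin_min
  Cmed_col Cmed_conv Cmed_form Cmed_min).
Qed.
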